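(* For every $p>1$, $$\mathrm{ZZ}\ \ge\ C_p^{(1)}:=\frac12\int_0^\infty V\Big\{\int_{-\infty}^{\infty}{\rm E}\Big[\big(f_{\phi|\mathbf{x}}(\varphi|\mathbf{x})^{\frac{1}{1-p}}+f_{\phi|\mathbf{x}}(\varphi+h|\mathbf{x})^{\frac{1}{1-p}}\big)^{1-p}\Big]d\varphi\Big\}(h)\,h\,dh$$ and $$\mathrm{ZZ}\ \ge\ C_p^{(2)}:=\frac12\int_0^\infty V\Big\{\int_{-\infty}^{\infty}{\rm E}\Big[f_{\phi|\mathbf{x}}(\varphi|\mathbf{x})+f_{\phi|\mathbf{x}}(\varphi+h|\mathbf{x})-\big(f_{\phi|\mathbf{x}}(\varphi|\mathbf{x})^{\frac{p}{p-1}}+f_{\phi|\mathbf{x}}(\varphi+h|\mathbf{x})^{\frac{p}{p-1}}\big)^{\frac{p-1}{p}}\Big]d\varphi\Big\}(h)\,h\,dh,$$ where the expectations are over the marginal law of $\mathbf{x}$. Consequently, combined with the extended Ziv–Zakai bound ${\rm E}[|\hat\phi(\mathbf{x})-\phi|^2]\ge \mathrm{ZZ}$, every estimator $\hat\phi$ satisfies ${\rm E}[|\hat\phi(\mathbf{x})-\phi|^2]\ge\max(C_p^{(1)},C_p^{(2)})$ for all $p>1$.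
   Context: A continuous scalar random parameter $\phi$ has prior density $f_\phi$, and the observation $\mathbf{x}$ (continuous, with conditional density $f_{\mathbf{x}|\phi}(\mathbf{x}|\varphi)$) has posterior density $f_{\phi|\mathbf{x}}(\cdot|\mathbf{x})$; assume the posterior density is positive. For $\varphi\in\mathbb{R}$, $h>0$, $P_{\min}(\varphi,\varphi+h)$ is the minimum (MAP) probability of error of the binary test $H_0:\mathbf{x}\sim f_{\mathbf{x}|\phi}(\cdot|\varphi)$ versus $H_1:\mathbf{x}\sim f_{\mathbf{x}|\phi}(\cdot|\varphi+h)$ with priors $P(H_0)=\frac{f_\phi(\varphi)}{f_\phi(\varphi)+f_\phi(\varphi+h)}$, $P(H_1)=1-P(H_0)$. The valley-filling operator is $(Vg)(h)=\sup_{\xi\ge0}g(h+\xi)$. The (extended Ziv–Zakai) quantity is $\mathrm{ZZ}=\frac12\int_0^\infty V\big\{\int_{-\infty}^\infty (f_\phi(\varphi)+f_\phi(\varphi+h))P_{\min}(\varphi,\varphi+h)\,d\varphi\big\}(h)\,h\,dh$. *)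

(* Defs.v *)
From HB Require Import structures.
From mathcomp Require Import all_boot all_order all_algebra.
From mathcomp Require Import all_classical all_reals all_analysis.
Set Implicit Arguments. Unset Strict Implicit. Unset Printing Implicit Defensive.
Import Order.TTheory GRing.Theory Num.Theory.
Import numFieldNormedType.Exports.
Local Open Scope classical_set_scope.
Local Open Scope ring_scope.

Section ZZDefs.
Context {R : realType} {d : measure_display} {T : measurableType d}.
Variable mu : {measure set T -> \bar R}.  (* reference measure for x *)
Variable fphi : R -> R.
Variable fx : T -> R -> R.                 (* fx x v = f_{x|phi}(x|v) *)

Local Notation leb := (@lebesgue_measure R).

Definition marg (x : T) : R :=
  fine (\int[leb]_v (fphi v * fx x v)%:E)%E.

Definition post (x : T) (v : R) : R := fphi v * fx x v / marg x.

Definition Emarg (q : T -> R) : \bar R := (\int[mu]_x (marg x * q x)%:E)%E.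

(* minimum probability of error of the binary test
   H0 : x ~ fx(.|v) vs H1 : x ~ fx(.|v+h), with priors
   P(H0) = fphi v/(fphi v + fphi(v+h)), P(H1) = 1 - P(H0);
   infimum over all (measurable) decision regions A = {decide H1}. *)
Definition Pmin (v h : R) : \bar R :=
  let pi0 := fphi v / (fphi v + fphi (v + h)) in
  let pi1 := 1 - pi0 in
  ereal_inf [set (pi0%:E * \int[mu]_(x in A) (fx x v)%:E
                 + pi1%:E * \int[mu]_(x in ~` A) (fx x (v + h))%:E)%E
            | A in [set A : set T | measurable A]].

Definition valley (g : R -> \bar R) (h : R) : \bar R :=
  ereal_sup [set g (h + xi) | xi in [set xi : R | 0 <= xi]].

Definition ZZform (g : R -> \bar R) : \bar R :=
  (((2^-1 : R)%:E) * \int[leb]_(h in [set h : R | (0 <= h)%R]) (valley g h * (h%:E)%R))%E.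

Definition ZZ : \bar R :=
  ZZform (fun h => \int[leb]_v ((fphi v + fphi (v + h))%:E * Pmin v h))%E.

Definition Cp1 (p : R) : \bar R :=
  ZZform (fun h => \int[leb]_v
    Emarg (fun x => powR (powR (post x v) (1 / (1 - p))
                          + powR (post x (v + h)) (1 / (1 - p))) (1 - p))%R)%E.

Definition Cp2 (p : R) : \bar R :=
  ZZform (fun h => \int[leb]_v
    Emarg (fun x => post x v + post x (v + h)
             - powR (powR (post x v) (p / (p - 1))
                     + powR (post x (v + h)) (p / (p - 1))) ((p - 1) / p))%R)%E.

Definition MSE (est : T -> R) : \bar R :=
  (\int[leb]_v \int[mu]_x (fphi v * fx x v * (est x - v) ^+ 2)%:E)%E.

End ZZDefs.

(* Main.v *)
Require Import Defs.
From HB Require Import structures.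
From mathcomp Require Import all_boot all_order all_algebra.
From mathcomp Require Import all_classical all_reals all_analysis.
Import Order.TTheory GRing.Theory Num.Theory.
Import numFieldNormedType.Exports.
Local Open Scope classical_set_scope.
Local Open Scope ring_scope.
From mathcomp Require Import measurable_realfun.
Lemma int_mono (d : measure_display) (T : measurableType d) (R : realType)
  (mu : {measure set T -> \bar R}) (D : set T) (f g : T -> \bar R) :
  (forall x, D x -> (0 <= g x)%E) -> (forall x, D x -> (f x <= g x)%E) ->
  (\int[mu]_(x in D) f x <= \int[mu]_(x in D) g x)%E.
Proof.
move=> g0 fg; rewrite [X in (X <= _)%E]integralE.
apply: (@le_trans _ _ (\int[mu]_(x in D) f^\+ x)%E).
  have := leeB (lexx (\int[mu]_(x in D) f^\+ x)%E)
     (integral_ge0 mu (fun x (_ : D x) => funeneg_ge0 f x)).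
  by rewrite sube0.
rewrite !ge0_integralE; last 2 first.
- by move=> x Dx; exact: g0.
- by move=> x _; exact: funepos_ge0.
apply: ereal_sup_le => _ [h hf <-]; exists h => //= x.
apply: (le_trans (hf x)); rewrite /patch; case: ifP => // /[1!inE] Dx.
by rewrite funeposE ge_max fg //= g0.
Qed.
Lemma ineq1 (R : realType) (a b p : R) : 0 < a -> 0 <= b -> 1 < p ->
  powR (powR a (1 / (1 - p)) + powR b (1 / (1 - p))) (1 - p) <= a.
Proof.
move=> a0 b0 p1.
set r := 1 / (1 - p).
have np : 1 - p != 0 by rewrite subr_eq0 eq_sym gt_eqF.
have ar0 : 0 < powR a r by exact: powR_gt0.
have Sge : powR a r <= powR a r + powR b r by rewrite lerDl powR_ge0.
have e1 : 1 - p = - (p - 1) by rewrite opprB.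
have ha : a = (powR (powR a r) (p - 1))^-1.
  by rewrite -powRN -e1 -powRrM /r mul1r mulVf // powRr1 // ltW.
rewrite [X in _ <= X]ha e1 powRN.
rewrite lef_pV2 ?posrE ?powR_gt0 //; last first.
  exact: (lt_le_trans ar0 Sge).
apply: (ge0_ler_powR _ _ _ Sge).
- by rewrite subr_ge0 ltW.
- by rewrite nnegrE ltW.
- by rewrite nnegrE addr_ge0 // powR_ge0.
Qed.

Lemma ineq2 (R : realType) (a b p : R) : 0 <= a -> 0 <= b -> 1 < p ->
  a + b - powR (powR a (p / (p - 1)) + powR b (p / (p - 1))) ((p - 1) / p) <= a.
Proof.
move=> a0 b0 p1.
rewrite lerBlDr lerD2l.
have st : p / (p - 1) * ((p - 1) / p) = 1.
  rewrite mulrA divfK ?mulfV //; by [rewrite gt_eqF // (lt_trans ltr01) | rewrite subr_eq0 gt_eqF].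
have {1}-> : b = powR (powR b (p / (p - 1))) ((p - 1) / p) by rewrite -powRrM st powRr1.
apply: ge0_ler_powR; rewrite ?nnegrE ?powR_ge0 ?addr_ge0 ?lerDr ?powR_ge0 //.
apply: divr_ge0; rewrite ?subr_ge0 ltW //; exact: (lt_trans ltr01).
Qed.
Lemma core (R : realType) (d : measure_display) (T : measurableType d)
  (mu : {measure set T -> \bar R}) (fphi : R -> R) (fx : T -> R -> R) (x0 : T) :
  measurable_fun setT (fun z : T * R => fx z.1 z.2) ->
  (forall v, 0 <= fphi v) ->
  (forall x v, 0 <= fx x v) ->
  (forall x v, 0 < post fphi fx x v) ->
  forall (v h : R) (q : T -> R),
  (forall x, q x <= post fphi fx x v) ->
  (forall x, q x <= post fphi fx x (v + h)) ->
  (Emarg mu fphi fx q <= (fphi v + fphi (v + h))%:E * Pmin mu fphi fx v h)%E.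
Proof.
move=> mfx fphi0 fx0 post0 v h q q1 q2.
have mfv w : measurable_fun setT (fun x => fx x w).
  have -> : (fun x => fx x w) = (fun z : T * R => fx z.1 z.2) \o (fun x => (x, w)) by [].
  by apply: measurableT_comp => //; exact: pair2_measurable.
have margpos x : 0 < marg fphi fx x.
  have : 0 <= marg fphi fx x.
    by apply: fine_ge0; apply: integral_ge0 => w _; rewrite lee_fin mulr_ge0.
  rewrite le_eqVlt => /orP[/eqP m0|//].
  by have := post0 x v; rewrite /post -m0 invr0 mulr0 ltxx.
have mpost x w : marg fphi fx x * post fphi fx x w = fphi w * fx x w.
  by rewrite /post mulrC divfK // gt_eqF.
have fpos w : 0 < fphi w.
  rewrite lt_neqAle fphi0 andbT eq_sym; apply/negP => /eqP f0.
  by have := post0 x0 w; rewrite /post f0 !mul0r ltxx.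
set a := fphi v; set b := fphi (v + h).
have ab0 : 0 < a + b by rewrite addr_gt0 // fpos.
have ea : (a + b) * (a / (a + b)) = a by rewrite mulrC divfK // gt_eqF.
have eb : (a + b) * (1 - a / (a + b)) = b.
  by rewrite mulrBr mulr1 ea addrC addKr.
have key : forall A, measurable A ->
  (Emarg mu fphi fx q <= (a + b)%:E *
     ((a / (a + b))%:E * \int[mu]_(x in A) (fx x v)%:E
      + (1 - a / (a + b))%:E * \int[mu]_(x in ~` A) (fx x (v + h))%:E))%E.
  move=> A mA.
  have pi0 : 0 <= a / (a + b) by apply: divr_ge0; [exact: fphi0 | exact: ltW].
  have pi1 : 0 <= 1 - a / (a + b).
    by rewrite subr_ge0 ler_pdivrMr // mul1r lerDl; exact: fphi0.
  rewrite ge0_muleDr; last 2 first.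
  - by rewrite mule_ge0 ?lee_fin // integral_ge0 // => x _; rewrite lee_fin.
  - by rewrite mule_ge0 ?lee_fin // integral_ge0 // => x _; rewrite lee_fin.
  rewrite !muleA -!EFinM ea eb.
  rewrite -(@ge0_integralZl_EFin _ _ _ mu A mA (fun x => (fx x v)%:E)
     (fun x _ => fx0 x v)); last 2 first.
  - by apply/measurable_realfun.measurable_EFinP; exact: measurable_funS (mfv v).
  - exact: fphi0.
  rewrite -(@ge0_integralZl_EFin _ _ _ mu (~` A) (measurableC mA) (fun x => (fx x (v + h))%:E)
     (fun x _ => fx0 x (v + h))); last 2 first.
  - by apply/measurable_realfun.measurable_EFinP; exact: measurable_funS (mfv (v + h)).
  - exact: fphi0.
  pose hr x := a * fx x v * \1_A x + b * fx x (v + h) * \1_(~` A) x.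
  pose H := EFin \o hr.
  have H0 x : (0 <= H x)%E.
    by rewrite /H /hr /= lee_fin addr_ge0 // !mulr_ge0 // ?indicE ?ler0n // ltW // fpos.
  have mH : measurable_fun setT H.
    rewrite /H; apply/measurable_realfun.measurable_EFinP; rewrite /hr; apply: measurable_funD; apply: measurable_funM.
    - by apply: measurable_funM => //; exact: measurable_cst.
    - exact: measurable_realfun.measurable_indic.
    - by apply: measurable_funM => //; exact: measurable_cst.
    - exact/measurable_realfun.measurable_indic/measurableC.
  have hs := @ge0_integral_setU _ _ _ mu A (~` A) mA (measurableC mA) H.
  rewrite setUCr in hs.
  rewrite (eq_integral H); last first.
    by move=> x /[1!inE] xA; rewrite /H /hr /= !indicE mem_set // memNset ?mulr1 ?mulr0 ?addr0 // EFinM.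
  rewrite [X in (_ <= _ + X)%E](eq_integral H); last first.
    by move=> x /[1!inE] xA; rewrite /H /hr /= !indicE (memNset xA) (mem_set (xA : (~` A) x)) mulr1 mulr0 add0r EFinM.
  rewrite -hs //; last first.
    by rewrite disj_set2E setICr.
  apply: int_mono => // x _; rewrite /H /hr /= !indicE.
  have [xA|xA] := boolP (x \in A).
  - rewrite in_setC xA /= mulr1 mulr0 addr0.
    by rewrite lee_fin /a -mpost ler_wpM2l // ltW.
  - rewrite in_setC xA /= mulr1 mulr0 add0r.
    by rewrite lee_fin /b -mpost ler_wpM2l // ltW.
rewrite /Pmin /= -/a -/b.
set E := Emarg mu fphi fx q.
have hE : ((a + b)^-1%:E * E <= ereal_inf [set ((a / (a + b))%:E * \int[mu]_(x in A) (fx x v)%:E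
      + (1 - a / (a + b))%:E * \int[mu]_(x in ~` A) (fx x (v + h))%:E)%E
            | A in [set A : set T | measurable A]])%E.
  apply/ereal_infP => _ [A mA <-].
  apply: (le_trans (lee_wpmul2l _ (key A mA))); first by rewrite lee_fin invr_ge0 ltW.
  by rewrite muleA -EFinM mulVf ?gt_eqF // mul1e.
apply: (le_trans _ (lee_wpmul2l _ hE)); last by rewrite lee_fin ltW.
by rewrite muleA -EFinM mulfV ?gt_eqF // mul1e.
Qed.

Lemma Pmin_ge0 (R : realType) (d : measure_display) (T : measurableType d)
  (mu : {measure set T -> \bar R}) (fphi : R -> R) (fx : T -> R -> R) :
  (forall v, 0 <= fphi v) -> (forall x v, 0 <= fx x v) ->
  forall v h, (0 <= Pmin mu fphi fx v h)%E.
Proof.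
move=> fphi0 fx0 v h; rewrite /Pmin /=.
set a := fphi v; set b := fphi (v + h).
have pi0 : 0 <= a / (a + b) by apply: divr_ge0; rewrite ?addr_ge0 //; exact: fphi0.
have pi1 : 0 <= 1 - a / (a + b).
  have [ab0|ab0] := eqVneq (a + b) 0; first by rewrite ab0 invr0 mulr0 subr0.
  have abp : 0 < a + b by rewrite lt_neqAle eq_sym ab0 addr_ge0 //; exact: fphi0.
  by rewrite subr_ge0 ler_pdivrMr // mul1r lerDl; exact: fphi0.
apply/ereal_infP => _ [A mA <-].
by rewrite adde_ge0 // mule_ge0 ?lee_fin // integral_ge0 // => x _; rewrite lee_fin.
Qed.

Lemma zzmono (R : realType) (g1 g2 : R -> \bar R) :
  (forall h, (0 <= g2 h)%E) -> (forall h, (g1 h <= g2 h)%E) ->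
  (ZZform g1 <= ZZform g2)%E.
Proof.
move=> g20 g12; rewrite /ZZform; apply: lee_wpmul2l; first by rewrite lee_fin invr_ge0.
apply: int_mono => h /= h0.
  apply: mule_ge0; last by rewrite lee_fin.
  apply: (le_trans (g20 h)); apply: ereal_sup_ubound; exists 0; last by rewrite addr0.
  by rewrite /=.
apply: lee_wpmul2r; first by rewrite lee_fin.
apply: ge_ereal_sup => _ [xi xi0 <-].
apply: (le_trans (g12 _)); apply: ereal_sup_ubound; by exists xi.
Qed.

Theorem mainTheorem10 (R : realType) (d : measure_display) (T : measurableType d)
  (mu : {measure set T -> \bar R}) (fphi : R -> R) (fx : T -> R -> R) :
  sigma_finite setT mu ->
  measurable_fun setT fphi ->
  (forall v, 0 <= fphi v) ->
  (\int[@lebesgue_measure R]_v (fphi v)%:E = 1)%E ->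
  measurable_fun setT (fun z : T * R => fx z.1 z.2) ->
  (forall x v, 0 <= fx x v) ->
  (forall v, \int[mu]_x (fx x v)%:E = 1)%E ->
  (forall x v, 0 < post fphi fx x v) ->
  forall p : R, 1 < p ->
    (Cp1 mu fphi fx p <= ZZ mu fphi fx)%E /\
    (Cp2 mu fphi fx p <= ZZ mu fphi fx)%E /\
    ((forall est : T -> R, measurable_fun setT est ->
        (ZZ mu fphi fx <= MSE mu fphi fx est)%E) ->
     forall est : T -> R, measurable_fun setT est ->
        (maxe (Cp1 mu fphi fx p) (Cp2 mu fphi fx p) <= MSE mu fphi fx est)%E).
Proof.
move=> _ _ fphi0 _ mfx fx0 fx1 post0 p p1.
have [[x0 _]|nT] := pselect (exists x : T, True); last first.
  exfalso; have := fx1 0.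
  have -> : [set: T] = set0.
    by apply/seteqP; split => x // _; exfalso; apply: nT; exists x.
  rewrite integral_set0 => /eqP; rewrite eqe eq_sym oner_eq0 //.
have rhs0 h : (0 <= \int[@lebesgue_measure R]_v
     ((fphi v + fphi (v + h))%:E * Pmin mu fphi fx v h))%E.
  apply: integral_ge0 => v _; apply: mule_ge0; last exact: Pmin_ge0.
  by rewrite lee_fin addr_ge0.
have pp : 0 <= post fphi fx x0 0 by apply: ltW.
have c1 : (Cp1 mu fphi fx p <= ZZ mu fphi fx)%E.
  apply: zzmono => // h; apply: int_mono => v _.
    by apply: mule_ge0; [rewrite lee_fin addr_ge0 | exact: Pmin_ge0].
  apply: (@core _ _ _ mu fphi fx x0) => // x.
    by apply: ineq1 => //; apply: ltW.
  by rewrite addrC; apply: ineq1 => //; apply: ltW.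
have c2 : (Cp2 mu fphi fx p <= ZZ mu fphi fx)%E.
  apply: zzmono => // h; apply: int_mono => v _.
    by apply: mule_ge0; [rewrite lee_fin addr_ge0 | exact: Pmin_ge0].
  apply: (@core _ _ _ mu fphi fx x0) => // x.
    by apply: ineq2 => //; apply: ltW.
  by rewrite [X in X - _]addrC [X in powR X _]addrC; apply: ineq2 => //; apply: ltW.
split => //; split => // Hzz est mest.
by rewrite ge_max; apply/andP; split; apply: (le_trans _ (Hzz est mest)).
Qed.
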